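(* Let $d\in\mathbb N$, $\mathcal D=\{1,\dots,d\}$, $w:\mathbb Z^d\to[1,\infty)$ a weight function, $\delta\in(0,1)$, and $f\in\mathrm H^w(\mathbb T^d)$. Let $d^{\mathrm{sup}}_\delta$ be the superposition dimension of $\mathrm H^w(\mathbb T^d)$ for $\delta$. If there exists a subset of ANOVA terms $U\subseteq U_{d^{\mathrm{sup}}_\delta}$ and $\varepsilon>0$ such that $\varrho(\mathbf u,f)<\varepsilon$ for every $\mathbf u\in U_{d^{\mathrm{sup}}_\delta}\setminus U$, then $$\frac{\|f-\mathrm T_Uf\|_{\mathrm L_2(\mathbb T^d)}}{\|f\|_{\mathrm H^w(\mathbb T^d)}}\le\sqrt{1-\delta}+\sqrt{|U_{d^{\mathrm{sup}}_\delta}\setminus U|\,\varepsilon}.$$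
   Context: $\mathbb T=[0,1)$ with periodic identification; $c_{\mathbf k}(g)$ Fourier coefficients. $\mathrm H^w(\mathbb T^d)=\{g\in\mathrm L_2:\|g\|_{\mathrm H^w}=(\sum_{\mathbf k}w(\mathbf k)^2|c_{\mathbf k}(g)|^2)^{1/2}<\infty\}$. For $\mathbf u\subseteq\mathcal D$: $\mathrm P_{\mathbf u}g(\mathbf x_{\mathbf u})=\int_{\mathbb T^{|\mathcal D\setminus\mathbf u|}}g(\mathbf x)\,d\mathbf x_{\mathcal D\setminus\mathbf u}$, ANOVA terms $g_{\mathbf u}=\mathrm P_{\mathbf u}g-\sum_{\mathbf v\subsetneq\mathbf u}g_{\mathbf v}$ (recursively). Variance $\sigma^2(g)=\|g\|_{\mathrm L_2}^2-|c_{\mathbf 0}(g)|^2$; global sensitivity index $\varrho(\mathbf u,g)=\sigma^2(g_{\mathbf u})/\sigma^2(g)$. $U_s=\{\mathbf u\subseteq\mathcal D:|\mathbf u|\le s\}$. Superposition dimension: $d^{\mathrm{sup}}_\delta=\min\{s\in\mathcal D:\sup_{g\in\mathrm H^w,\|g\|_{\mathrm H^w}\le1}\sum_{\mathbf u\subseteq\mathcal D,|\mathbf u|>s}\|g_{\mathbf u}\|^2_{\mathrm L_2}\le1-\delta\}$. A subset of ANOVA terms is a $U\subseteq\mathcal P(\mathcal D)$ closed under taking subsets; $\mathrm T_Uf=\sum_{\mathbf u\in U}f_{\mathbf u}$. *)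

(* Defs.v *)
From HB Require Import structures.
From mathcomp Require Import all_boot all_order all_algebra.
From mathcomp Require Import all_classical all_reals all_analysis.
From mathcomp Require Import complex.
Set Implicit Arguments. Unset Strict Implicit. Unset Printing Implicit Defensive.
Import Order.TTheory GRing.Theory Num.Theory.
Local Open Scope ring_scope.
Local Open Scope classical_set_scope.

(* Frequency lattice Z^d, indexed by D = {1,..,d} ~ 'I_d *)
Definition freq (d : nat) := {ffun 'I_d -> int}.

(* A function g : T^d -> C in L_2 is represented by its Fourier coefficients
   c_k(g), k in Z^d (Parseval / Riesz-Fischer) *)
Definition coefs (R : realType) (d : nat) := freq d -> R[i].

Definition abs2 (R : realType) (z : R[i]) : R :=
  (complex.Re z) ^+ 2 + (complex.Im z) ^+ 2.

Definition L2sq (R : realType) d (g : coefs R d) : \bar R :=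
  \esum_(k in [set: freq d]) (abs2 (g k))%:E.
Definition Hwsq (R : realType) d (w : freq d -> R) (g : coefs R d) : \bar R :=
  \esum_(k in [set: freq d]) (w k ^+ 2 * abs2 (g k))%:E.

Definition L2norm (R : realType) d (g : coefs R d) : R := Num.sqrt (fine (L2sq g)).
Definition Hwnorm (R : realType) d (w : freq d -> R) (g : coefs R d) : R :=
  Num.sqrt (fine (Hwsq w g)).

Definition in_Hw (R : realType) d (w : freq d -> R) (g : coefs R d) : Prop :=
  (Hwsq w g < +oo)%E.

Definition k0 d : freq d := [ffun _ => 0%R].

(* P_u g (x_u) = integral of g over x_{D\u}; on the Fourier side this keeps
   exactly the coefficients c_k with k_j = 0 for all j outside u. *)
Definition Pu (R : realType) d (u : {set 'I_d}) (g : coefs R d) : coefs R d :=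
  fun k => if [forall j, (j \notin u) ==> (k j == 0%R)] then g k else 0.

(* ANOVA terms g_u = P_u g - sum_{v proper subset of u} g_v, by recursion
   (fuel n, with n = #|u| sufficient since #|v| < #|u| for v proper in u). *)
Fixpoint anova_aux (R : realType) d (n : nat) (u : {set 'I_d}) (g : coefs R d)
  : coefs R d :=
  match n with
  | 0 => Pu u g
  | n'.+1 => fun k => Pu u g k - \sum_(v : {set 'I_d} | v \proper u) anova_aux n' v g k
  end.
Definition anova (R : realType) d (u : {set 'I_d}) (g : coefs R d) : coefs R d :=
  anova_aux #|u| u g.

Definition variance (R : realType) d (g : coefs R d) : R :=
  fine (L2sq g) - abs2 (g (k0 d)).
Definition gsi (R : realType) d (u : {set 'I_d}) (g : coefs R d) : R :=
  variance (anova u g) / variance g.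

Definition TU (R : realType) d (U : {set {set 'I_d}}) (g : coefs R d) : coefs R d :=
  fun k => \sum_(u in U) anova u g k.

Definition anova_subset d (U : {set {set 'I_d}}) : Prop :=
  (finset.set0 : {set 'I_d}) \in U /\ forall u v : {set 'I_d}, v \subset u -> u \in U -> v \in U.

Definition supdim_cond (R : realType) d (w : freq d -> R) (delta : R) (s : nat)
  : Prop :=
  (ereal_sup [set (\sum_(u : {set 'I_d} | (s < #|u|)%N) L2sq (anova u g))%E
             | g in [set g : coefs R d | in_Hw w g /\ (Hwnorm w g <= 1)%R]]
   <= (1 - delta)%:E)%E.

(* d^sup_delta = min { s in {1..d} : supdim_cond s } (the condition always
   holds for s = d, so d is only a formal default) *)
Definition supdim (R : realType) d (w : freq d -> R) (delta : R) : nat :=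
  \big[minn/d]_(s < d.+1 | (0 < s)%N && `[< supdim_cond w delta s >]) s.

(* Main.v *)
Require Import Defs.
From HB Require Import structures.
From mathcomp Require Import all_boot all_order all_algebra.
From mathcomp Require Import all_classical all_reals all_analysis.
From mathcomp Require Import complex.
Import Order.TTheory GRing.Theory Num.Theory.
Set Implicit Arguments. Unset Strict Implicit.
Local Open Scope ring_scope.
Lemma esumZ_le (R : realType) (T : choiceType) (S : set T) (a : T -> \bar R) (c : R) :
  0 <= c -> (forall i, (0 <= a i)%E) ->
  (\esum_(i in S) (c%:E * a i) <= c%:E * \esum_(i in S) a i)%E.
Proof.
move=> c0 a0; apply: ge_ereal_sup => _ [X [finX XS]] <-.
rewrite fsbig_finite// -ge0_sume_distrr// -fsbig_finite//.
apply: lee_wpmul2l; first by rewrite lee_fin.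
by apply: ereal_sup_ubound; exists X.
Qed.

Lemma esumZ (R : realType) (T : choiceType) (S : set T) (a : T -> \bar R) (c : R) :
  0 < c -> (forall i, (0 <= a i)%E) ->
  (\esum_(i in S) (c%:E * a i) = c%:E * \esum_(i in S) a i)%E.
Proof.
move=> c0 a0; apply/eqP; rewrite eq_le (@esumZ_le R T S a c (ltW c0) a0) /=.
have ca0 i : (0 <= c%:E * a i)%E by rewrite mule_ge0// lee_fin ltW.
have ci0 : 0 < c^-1 by rewrite invr_gt0.
have := @esumZ_le R T S _ (c^-1) (ltW ci0) ca0.
under eq_esum do rewrite muleA -EFinM mulVf ?gt_eqF// mul1e.
move=> h; rewrite -(@lee_pmul2l _ (c^-1%:E))// ?lte_fin//.
rewrite muleA -EFinM mulVf ?gt_eqF// mul1e.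
by [].
Qed.
Definition supp d (k : freq d) : {set 'I_d} := [set j | k j != 0%R].

Lemma PuE (R : realType) d (u : {set 'I_d}) (g : coefs R d) k :
  Pu u g k = if supp k \subset u then g k else 0.
Proof.
rewrite /Pu; congr (if _ then _ else _); apply/forallP/fintype.subsetP.
  move=> h j; rewrite inE => kj; move: (h j); apply: contraLR => ju.
  by rewrite ju.
move=> h j; apply/implyP => ju; apply: contraR ju => kj.
by apply: h; rewrite inE.
Qed.

Lemma anova_auxE (R : realType) d n (u : {set 'I_d}) (g : coefs R d) k :
  (#|u| <= n)%N -> anova_aux n u g k = if supp k == u then g k else 0.
Proof.
elim: n u => [|n IH] u hu /=.
  move: hu; rewrite leqn0 cards_eq0 => /eqP ->.
  by rewrite PuE finset.subset0.
rewrite PuE.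
rewrite (eq_bigr (fun v : {set 'I_d} => if supp k == v then g k else 0)); last first.
  move=> v /proper_card hv; apply: IH; rewrite -ltnS; exact: leq_trans hv hu.
have -> : \sum_(v : {set 'I_d} | v \proper u) (if supp k == v then g k else 0)
    = if supp k \proper u then g k else 0.
  case: ifP => hp.
    rewrite (bigD1 (supp k)) //= eqxx big1 ?addr0 // => v /andP[_ /negPf].
    by rewrite eq_sym => ->.
  apply: big1 => v hv; case: eqP => // e; by rewrite e hv in hp.
rewrite finset.properEneq.
case: (boolP (supp k \subset u)) => hs; last first.
  rewrite andbF subrr; case: eqP => // e.
  by rewrite e subxx in hs.
by rewrite andbT; case: eqP => _ /=; rewrite ?subrr ?subr0.
Qed.

Lemma anovaE (R : realType) d (u : {set 'I_d}) (g : coefs R d) k :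
  anova u g k = if supp k == u then g k else 0.
Proof. exact: anova_auxE. Qed.

Lemma TUE (R : realType) d (U : {set {set 'I_d}}) (g : coefs R d) k :
  TU U g k = if supp k \in U then g k else 0.
Proof.
rewrite /TU; under eq_bigr do rewrite anovaE.
case: ifP => hp.
  rewrite (bigD1 (supp k)) //= eqxx big1 ?addr0 // => v /andP[_ /negPf].
  by rewrite eq_sym => ->.
apply: big1 => v hv; case: eqP => // e; by rewrite e hv in hp.
Qed.

Section S.
Variable R : realType.
Local Open Scope ring_scope.

Lemma abs2_ge0 (z : R[i]) : 0 <= abs2 z.
Proof. by rewrite /abs2 addr_ge0 // sqr_ge0. Qed.

Lemma abs20 : abs2 (0 : R[i]) = 0.
Proof. by rewrite /abs2 /= expr2 mulr0 addr0. Qed.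

Lemma abs2_if (b : bool) (z : R[i]) :
  ((abs2 (if b then z else 0))%:E = if b then (abs2 z)%:E else 0)%E.
Proof. by case: b; rewrite ?abs20. Qed.

Lemma abs2_scale (c : R) (z : R[i]) :
  abs2 (complex.Complex (c * complex.Re z) (c * complex.Im z)) = c ^+ 2 * abs2 z.
Proof. by rewrite /abs2 /= !exprMn mulrDr. Qed.

Lemma sum_supp d (V : nmodType) (P : pred {set 'I_d}) (x : V) (k : freq d) :
  \sum_(u : {set 'I_d} | P u) (if supp k == u then x else 0) = if P (supp k) then x else 0.
Proof.
case: ifP => hp.
  rewrite (bigD1 (supp k)) //= eqxx big1 ?addr0 // => v /andP[_ /negPf].
  by rewrite eq_sym => ->.
apply: big1 => v hv; case: eqP => // e; by rewrite e hv in hp.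
Qed.

Lemma supp_k0 d : supp (k0 d) = finset.set0.
Proof. by apply/setP => j; rewrite !inE /k0 ffunE eqxx. Qed.

Lemma L2sq_anovaE d (u : {set 'I_d}) (g : coefs R d) :
  L2sq (anova u g) = (\esum_(k in [set: freq d]) (if supp k == u then (abs2 (g k))%:E else 0))%E.
Proof. by apply: eq_esum => k _; rewrite anovaE abs2_if. Qed.

Lemma L2sq_ge0 d (g : coefs R d) : (0 <= L2sq g)%E.
Proof. by apply: esum_ge0 => k _; rewrite lee_fin abs2_ge0. Qed.

Lemma supdim_ok d (w : freq d -> R) (delta : R) :
  0 < delta < 1 -> supdim_cond w delta (supdim w delta).
Proof.
move=> /andP[d0 d1].
rewrite /supdim; apply: (big_ind (fun s => supdim_cond w delta s)).
- rewrite /supdim_cond; apply: ge_ereal_sup => _ [g _ <-].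
  rewrite big1; first by rewrite lee_fin subr_ge0 ltW.
  move=> u hu; exfalso; move: hu; rewrite ltnNge.
  by have := max_card u; rewrite card_ord => ->.
- by move=> x y hx hy; rewrite /minn; case: ifP.
- by move=> i /andP[_ /asboolP].
Qed.

Lemma sqrt_subadd (A B : R) : 0 <= A -> 0 <= B ->
  Num.sqrt (A + B) <= Num.sqrt A + Num.sqrt B.
Proof.
move=> A0 B0.
have S0 : 0 <= Num.sqrt A + Num.sqrt B by rewrite addr_ge0 ?sqrtr_ge0.
rewrite -(ger0_norm S0) -sqrtr_sqr ler_sqrt ?sqr_ge0 //.
rewrite sqrrD !sqr_sqrtr // -addrA lerD2l lerDr.
by rewrite mulrn_wge0 // mulr_ge0 ?sqrtr_ge0.
Qed.

Lemma final_ineq (A B H a b : R) : 0 <= A -> 0 <= B -> 0 < H -> 0 <= a -> 0 <= b ->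
  A <= a * H -> B <= b * H ->
  Num.sqrt (A + B) / Num.sqrt H <= Num.sqrt a + Num.sqrt b.
Proof.
move=> A0 B0 H0 a0 b0 hA hB.
have sH : 0 < Num.sqrt H by rewrite sqrtr_gt0.
rewrite ler_pdivrMr //.
apply: (le_trans (sqrt_subadd A0 B0)).
rewrite mulrDl -!sqrtrM //.
by apply: lerD; apply: ler_wsqrtr.
Qed.

End S.

Theorem theorem6p1 (R : realType) (d : nat) (hd : (0 < d)%N)
  (w : freq d -> R) (hw : forall k, 1 <= w k)
  (delta : R) (hdelta : 0 < delta < 1)
  (f : coefs R d) (hf : in_Hw w f)
  (U : {set {set 'I_d}}) (eps : R) :
  anova_subset U ->
  (forall u, u \in U -> (#|u| <= supdim w delta)%N) ->
  0 < eps ->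
  (forall u : {set 'I_d}, (#|u| <= supdim w delta)%N -> u \notin U ->
     gsi u f < eps) ->
  L2norm (fun k => f k - TU U f k) / Hwnorm w f
  <= Num.sqrt (1 - delta)
     + Num.sqrt (#|[set u : {set 'I_d} | (#|u| <= supdim w delta)%N & u \notin U]|%:R
                 * eps).
Proof.
move=> [U0 Usub] Us eps0 hgsi.
set s := supdim w delta.
set N := [set u : {set 'I_d} | (#|u| <= s)%N & u \notin U].
have Hf : (Hwsq w f < +oo)%E := hf.
have w2 k : 1 <= w k ^+ 2 by rewrite expr_ge1 // (le_trans _ (hw k)).
have L2leH : (L2sq f <= Hwsq w f)%E.
  apply: le_esum => k _; rewrite lee_fin ler_peMl ?abs2_ge0 //.
have Lule u : (L2sq (anova u f) <= L2sq f)%E.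
  rewrite L2sq_anovaE; apply: le_esum => k _.
  by case: ifP => _; rewrite ?lee_fin ?abs2_ge0.
have finE x : (0 <= x)%E -> (x <= Hwsq w f)%E -> x = (fine x)%:E.
  move=> x0 xH; rewrite fineK // ge0_fin_numE //; exact: le_lt_trans xH Hf.
set a := fun u => fine (L2sq (anova u f)).
have aE u : L2sq (anova u f) = (a u)%:E.
  by apply: finE; [exact: L2sq_ge0 | exact: le_trans (Lule u) L2leH].
have a0 u : 0 <= a u by rewrite -lee_fin -aE L2sq_ge0.
set H2 := fine (Hwsq w f).
have HE : Hwsq w f = H2%:E.
  apply: finE => //; apply: esum_ge0 => k _; rewrite lee_fin mulr_ge0 ?abs2_ge0 //.
  by rewrite (le_trans _ (w2 k)).
have H0 : 0 <= H2 by rewrite -lee_fin -HE (le_trans (L2sq_ge0 f)).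
set Lf := fine (L2sq f).
have LfE : L2sq f = Lf%:E by apply: finE => //; exact: L2sq_ge0.
have LfH : Lf <= H2 by rewrite -lee_fin -LfE -HE.
have resE : L2sq (fun k => f k - TU U f k) = (\sum_(u | u \notin U) a u)%:E.
  rewrite -sumEFin; under eq_bigr do rewrite -aE.
  under eq_bigr do rewrite L2sq_anovaE.
  rewrite -esum_sum; last by move=> k u _ _; case: ifP => _; rewrite ?lee_fin ?abs2_ge0.
  apply: eq_esum => k _; rewrite sum_supp TUE.
  by case: ifP => _; rewrite ?subrr ?subr0 ?abs20.
have splitE : \sum_(u | u \notin U) a u
    = \sum_(u : {set 'I_d} | (s < #|u|)%N) a u + \sum_(u in N) a u.
  rewrite (bigID (fun u : {set 'I_d} => (s < #|u|)%N)) /=; congr (_ + _).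
    apply: eq_bigl => u; case h: (s < #|u|)%N; rewrite ?andbT ?andbF //.
    by apply/negP => /Us; rewrite leqNgt h.
  by apply: eq_bigl => u; rewrite inE -leqNgt andbC.
have F3 : 0 < H2 -> \sum_(u : {set 'I_d} | (s < #|u|)%N) a u <= (1 - delta) * H2.
  move=> Hp.
  set c := (Num.sqrt H2)^-1.
  have c2 : c ^+ 2 = H2^-1 by rewrite /c exprVn sqr_sqrtr // ltW.
  have c2p : 0 < c ^+ 2 by rewrite c2 invr_gt0.
  pose g : coefs R d := fun k => complex.Complex (c * complex.Re (f k)) (c * complex.Im (f k)).
  have HgE : Hwsq w g = ((c ^+ 2 * H2)%:E)%E.
    rewrite EFinM -HE /Hwsq -esumZ //; last by move=> k; rewrite lee_fin mulr_ge0 ?abs2_ge0 // (le_trans _ (w2 k)).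
    apply: eq_esum => k _; rewrite /g abs2_scale -EFinM; congr (_%:E).
    by rewrite mulrCA.
  have Lg u : L2sq (anova u g) = ((c ^+ 2 * a u)%:E)%E.
    rewrite EFinM -aE !L2sq_anovaE -esumZ //; last by move=> k; case: ifP => _; rewrite ?lee_fin ?abs2_ge0.
    apply: eq_esum => k _; case: ifP => _; last by rewrite mule0.
    by rewrite /g abs2_scale EFinM.
  have := supdim_ok w hdelta; rewrite /supdim_cond -/s => hc.
  have : ((\sum_(u : {set 'I_d} | (s < #|u|)%N) L2sq (anova u g)) <= (1 - delta)%:E)%E.
    apply: le_trans hc; apply: ereal_sup_ubound; exists g => //; split.
      by rewrite /in_Hw HgE ltry.
    by rewrite /Hwnorm HgE /= c2 mulVf ?gt_eqF // sqrtr1.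
  under eq_bigr do rewrite Lg.
  rewrite sumEFin lee_fin -mulr_sumr c2 mulrC -ler_pdivrMr //.
have F4 : forall u, u \in N -> a u <= eps * H2.
  move=> u; rewrite inE => /andP[us uU].
  have u0 : u != finset.set0 by apply: contraNneq uU => ->.
  have hg := hgsi u us uU.
  have varu : Defs.variance (anova u f) = a u.
    by rewrite /Defs.variance anovaE supp_k0 eq_sym (negPf u0) abs20 subr0.
  have key : (L2sq (anova u f) + (abs2 (f (k0 d)))%:E <= L2sq f)%E.
    apply: (@le_trans _ _ (\esum_(k in [set: freq d])
       ((if supp k == u then (abs2 (f k))%:E else 0) +
        (if supp k == finset.set0 then (abs2 (f k))%:E else 0)))%E); last first.
      apply: le_esum => k _.
      case: eqP => e1; case: eqP => e2.
      - by rewrite -e1 e2 eqxx in u0.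
      - by rewrite adde0.
      - by rewrite add0e.
      - by rewrite adde0 lee_fin abs2_ge0.
    rewrite esumD; last 2 first.
      by move=> k _; case: ifP => _; rewrite ?lee_fin ?abs2_ge0.
      by move=> k _; case: ifP => _; rewrite ?lee_fin ?abs2_ge0.
    rewrite -L2sq_anovaE leeD2l //.
    apply: esum_ge; exists [set k0 d]%classic.
      by split; [exact: finite_set1 | by []].
    by rewrite fsbig_set1 supp_k0 eqxx.
  have avar : a u <= Defs.variance f.
    move: key; rewrite aE LfE -EFinD lee_fin => key.
    by rewrite /Defs.variance -/Lf lerBrDr.
  have varLf : Defs.variance f <= Lf by rewrite /Defs.variance -/Lf lerBlDr lerDl abs2_ge0.
  have [v0|vp] := eqVneq (Defs.variance f) 0.
    apply: (le_trans avar); rewrite v0 mulr_ge0 // ltW //.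
  have vpos : 0 < Defs.variance f by rewrite lt_def vp (le_trans (a0 u) avar).
  move: hg; rewrite /gsi varu ltr_pdivrMr // => hlt.
  apply: (le_trans (ltW hlt)); rewrite ler_pM2l //.
  exact: le_trans varLf LfH.
rewrite /L2norm resE /= /Hwnorm HE /=.
have [H20|Hp] := eqVneq H2 0.
  by rewrite H20 sqrtr0 invr0 mulr0 addr_ge0 ?sqrtr_ge0.
have Hpos : 0 < H2 by rewrite lt_def Hp H0.
rewrite splitE; apply: final_ineq => //.
- by rewrite sumr_ge0.
- by rewrite sumr_ge0.
- by rewrite subr_ge0 ltW //; case/andP: hdelta.
- by rewrite mulr_ge0 // ltW.
- exact: F3.
- apply: (le_trans (ler_sum _ F4)).
  by rewrite sumr_const -mulrA mulr_natl.
Qed.
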